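(* Let $A$ be a commutative ring with $1\ne0$. The valuation divisibilities on $A$ correspond one-to-one to the Bourbaki valuations of $A$ (up to equivalence), via $v\mapsto |^v$ where $a|^vb\Leftrightarrow v(a)\le v(b)$; moreover $I(|^v)=v^{-1}(\infty)$.
   Context: A divisibility on $A$ is a binary relation $|\subseteq A\times A$ such that for all $a,b,c$: (1) $a|a$; (2) $a|b,\ b|c\Rightarrow a|c$; (3) $a|b,\ a|c\Rightarrow a|b-c$; (4) $a|b\Rightarrow ac|bc$; (5) $0\nmid1$. Support $I(|)=\{a;\ 0|a\}$. $|$ is total if $a|b$ or $b|a$ for all $a,b$; it has cancellation if $0\nmid c$ and $ac|bc$ imply $a|b$; it is a valuation divisibility if it is total and has cancellation. A Bourbaki valuation on $A$ is a map $v:A\to\Gamma\cup\{\infty\}$, $\Gamma$ an ordered abelian group, such that $I=v^{-1}(\infty)$ is a prime ideal of $A$ and there is a field valuation $\bar v$ on $\mathrm{Quot}(A/I)$ with $v(a)=\bar v(a+I)$ for all $a\in A$. Two Bourbaki valuations are equivalent if they have the same $v^{-1}(\infty)$ and their induced field valuations have the same valuation ring. *)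

(* Defs.v *)
From HB Require Import structures.
From mathcomp Require Import all_boot all_order all_algebra.
Set Implicit Arguments. Unset Strict Implicit. Unset Printing Implicit Defensive.
Import GRing.Theory.
Local Open Scope ring_scope.

Section Divisibility.
Variable A : comNzRingType.

Definition divisibility (d : A -> A -> Prop) : Prop :=
  [/\ (forall a, d a a),
      (forall a b c, d a b -> d b c -> d a c),
      (forall a b c, d a b -> d a c -> d a (b - c)),
      (forall a b c, d a b -> d (a * c) (b * c))
    & ~ d 0 1].

Definition support_div (d : A -> A -> Prop) (a : A) : Prop := d 0 a.

Definition total_div (d : A -> A -> Prop) : Prop := forall a b, d a b \/ d b a.

Definition cancellation_div (d : A -> A -> Prop) : Prop :=
  forall a b c, ~ d 0 c -> d (a * c) (b * c) -> d a b.

Definition valuation_divisibility (d : A -> A -> Prop) : Prop :=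
  [/\ divisibility d, total_div d & cancellation_div d].
End Divisibility.

(** * Ordered abelian groups and Gamma \cup {oo} (encoded as [option G],
      [None] standing for oo) *)
Definition ordered_abelian_group (G : zmodType) (le : rel G) : Prop :=
  [/\ (forall x, le x x),
      (forall x y, le x y -> le y x -> x = y),
      (forall x y z, le x y -> le y z -> le x z),
      (forall x y, le x y || le y x)
    & (forall x y z, le x y -> le (x + z) (y + z))].

Definition oleq (G : zmodType) (le : rel G) (x y : option G) : bool :=
  match x, y with
  | _, None => true
  | None, Some _ => false
  | Some a, Some b => le a b
  end.

Definition oadd (G : zmodType) (x y : option G) : option G :=
  match x, y with
  | Some a, Some b => Some (a + b)
  | _, _ => None
  end.

Definition field_valuation (K : fieldType) (G : zmodType) (le : rel G)
    (w : K -> option G) : Prop :=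
  [/\ (forall x, w x = None <-> x = 0),
      (forall x y, w (x * y) = oadd (w x) (w y))
    & (forall x y, oleq le (w x) (w (x + y)) || oleq le (w y) (w (x + y)))].

Definition valuation_ring (K : fieldType) (G : zmodType) (le : rel G)
    (w : K -> option G) (x : K) : Prop := oleq le (Some 0) (w x).

Section Bourbaki.
Variable A : comNzRingType.

Definition is_prime_ideal (I : A -> Prop) : Prop :=
  [/\ I 0,
      (forall a b, I a -> I b -> I (a + b)),
      (forall a b, I b -> I (a * b)),
      ~ I 1
    & (forall a b, I (a * b) -> I a \/ I b)].

Definition infty_set (G : zmodType) (v : A -> option G) (a : A) : Prop :=
  v a = None.

(** [quot_field_data I K phi]: [phi] is a ring morphism A -> K with kernel
    [I] and every element of [K] is a fraction [phi a / phi b]; i.e. [phi]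
    is (up to isomorphism) the map A -> A/I -> Quot(A/I). *)
Definition quot_field_data (I : A -> Prop) (K : fieldType) (phi : {rmorphism A -> K}) : Prop :=
  (forall a, phi a = 0 <-> I a) /\
  (forall x : K, exists a b, phi b != 0 /\ x = phi a / phi b).

(** [induced_field_valuation v K phi w]: [w] is a field valuation on
    K = Quot(A / v^-1(oo)) with v(a) = w(a + I). *)
Definition induced_field_valuation (G : zmodType) (le : rel G) (v : A -> option G)
    (K : fieldType) (phi : {rmorphism A -> K}) (w : K -> option G) : Prop :=
  [/\ quot_field_data (infty_set v) phi,
      field_valuation le w
    & (forall a, v a = w (phi a))].

Definition bourbaki_valuation (G : zmodType) (le : rel G) (v : A -> option G) : Prop :=
  [/\ ordered_abelian_group le,
      is_prime_ideal (infty_set v)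
    & exists (K : fieldType) (phi : {rmorphism A -> K}) (w : K -> option G),
        induced_field_valuation le v phi w].

(** Equivalence: same v^-1(oo), and the induced field valuations have the
    same valuation ring in Quot(A/I) (the two models of Quot(A/I) being
    identified through the canonical isomorphism phi1 a / phi1 b |-> phi2 a / phi2 b). *)
Definition bourbaki_equiv (G1 : zmodType) (le1 : rel G1) (v1 : A -> option G1)
    (G2 : zmodType) (le2 : rel G2) (v2 : A -> option G2) : Prop :=
  (forall a, v1 a = None <-> v2 a = None) /\
  (forall (K1 : fieldType) (phi1 : {rmorphism A -> K1}) (w1 : K1 -> option G1)
          (K2 : fieldType) (phi2 : {rmorphism A -> K2}) (w2 : K2 -> option G2),
     induced_field_valuation le1 v1 phi1 w1 ->
     induced_field_valuation le2 v2 phi2 w2 ->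
     forall a b, v1 b <> None ->
       (valuation_ring le1 w1 (phi1 a / phi1 b) <->
        valuation_ring le2 w2 (phi2 a / phi2 b))).

Definition div_of_val (G : zmodType) (le : rel G) (v : A -> option G) (a b : A) : Prop :=
  oleq le (v a) (v b).
End Bourbaki.

(* Main.v *)
Require Import Defs.
From mathcomp Require Import all_boot all_order all_algebra.
From HB Require Import structures.
From mathcomp Require Import boolp.
From mathcomp.algebra_tactics Require Import ring.
Set Implicit Arguments. Unset Strict Implicit. Unset Printing Implicit Defensive.
Import GRing.Theory.
Local Open Scope ring_scope.

Section Quot.
Context (T : Type) (R : T -> T -> Prop).
Context (Rrefl : forall x, R x x) (Rsym : forall x y, R x y -> R y x)
  (Rtrans : forall x y z, R x y -> R y z -> R x z).

Definition quot := {P : T -> Prop | exists x, P = R x}.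
Definition qpi (x : T) : quot := exist _ (R x) (ex_intro _ x erefl).
Definition qrepr (q : quot) : T := sval (cid (svalP q)).

Lemma qpi_eq x y : qpi x = qpi y <-> R x y.
Proof.
split.
  by move=> /(congr1 sval) /= E; rewrite E; apply: Rrefl.
move=> Rxy; rewrite /qpi.
have E : R x = R y.
  apply/funext => z; apply/propext; split => h.
    exact: Rtrans (Rsym Rxy) h.
  exact: Rtrans Rxy h.
move: (ex_intro _ x _); rewrite E => p; congr exist; exact: Prop_irrelevance.
Qed.

Lemma quot_eq (a b : quot) : sval a = sval b -> a = b.
Proof.
case: a b => P h [Q k] /= E; subst Q; by rewrite (Prop_irrelevance h k).
Qed.

Lemma qreprK q : qpi (qrepr q) = q.
Proof.
apply: quot_eq; rewrite /qrepr /=; by case: (cid (svalP q)) => x /= ->.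
Qed.

Lemma qreprR x : R (qrepr (qpi x)) x.
Proof. by apply/qpi_eq; rewrite qreprK. Qed.

Lemma quotP (q : quot) : exists x, q = qpi x.
Proof. by exists (qrepr q); rewrite qreprK. Qed.

Lemma qlift1E (f : T -> T) : (forall x y, R x y -> R (f x) (f y)) ->
  forall x, qpi (f (qrepr (qpi x))) = qpi (f x).
Proof. by move=> H x; apply/qpi_eq/H/qreprR. Qed.

Lemma qlift2E (f : T -> T -> T) :
  (forall x x' y y', R x x' -> R y y' -> R (f x y) (f x' y')) ->
  forall x y, qpi (f (qrepr (qpi x)) (qrepr (qpi y))) = qpi (f x y).
Proof. by move=> H x y; apply/qpi_eq/H; apply/qreprR. Qed.

Lemma qliftPE (P : T -> T -> Prop) :
  (forall x x' y y', R x x' -> R y y' -> P x y -> P x' y') ->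
  forall x y, P (qrepr (qpi x)) (qrepr (qpi y)) <-> P x y.
Proof.
move=> H x y; split; apply: H; try apply: qreprR; apply: Rsym; apply: qreprR.
Qed.

Lemma qliftfE U (f : T -> U) : (forall x y, R x y -> f x = f y) ->
  forall x, f (qrepr (qpi x)) = f x.
Proof. by move=> H x; apply/H/qreprR. Qed.
End Quot.


Section Div.
Context (A : comNzRingType) (d : A -> A -> Prop) (hd : valuation_divisibility d).

Let dv : divisibility d. Proof. by case: hd. Qed.
Lemma drefl a : d a a. Proof. by case: dv. Qed.
Lemma dtrans a b c : d a b -> d b c -> d a c. Proof. by case: dv => _ H _ _ _; apply: H. Qed.
Lemma dsub a b c : d a b -> d a c -> d a (b - c). Proof. by case: dv => _ _ H _ _; apply: H. Qed.
Lemma dmul a b c : d a b -> d (a * c) (b * c). Proof. by case: dv => _ _ _ H _; apply: H. Qed.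
Lemma d01 : ~ d 0 1. Proof. by case: dv. Qed.
Lemma dtot a b : d a b \/ d b a. Proof. by case: hd => _ H _. Qed.
Lemma dcan a b c : ~ d 0 c -> d (a * c) (b * c) -> d a b. Proof. by case: hd => _ _ H; apply: H. Qed.

Lemma deq a b a' b' : a = a' -> b = b' -> d a b -> d a' b'. Proof. by move=> -> ->. Qed.
Lemma d0 a : d a 0. Proof. by apply: (deq erefl (subrr a)); apply: dsub; apply: drefl. Qed.
Lemma dopp a b : d a b -> d a (- b).
Proof. by move=> h; apply: (deq erefl (sub0r b)); apply: dsub => //; apply: d0. Qed.
Lemma dadd a b c : d a b -> d a c -> d a (b + c).
Proof. by move=> h1 h2; apply: (deq erefl _ (dsub h1 (dopp h2))); rewrite opprK. Qed.
Lemma dmull a b c : d a b -> d (c * a) (c * b).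
Proof. by move=> h; rewrite ![c * _]mulrC; apply: dmul. Qed.
Lemma dmul2 a b c e : d a b -> d c e -> d (a * c) (b * e).
Proof. by move=> h1 h2; apply: (dtrans (dmul c h1)); apply: dmull. Qed.

Definition Id (x : A) := d 0 x.
Lemma dI a b : Id b -> d a b. Proof. by move=> h; apply: dtrans h; apply: d0. Qed.
Lemma I0 : Id 0. Proof. exact: drefl. Qed.
Lemma Iadd a b : Id a -> Id b -> Id (a + b). Proof. exact: dadd. Qed.
Lemma Iopp a : Id a -> Id (- a). Proof. exact: dopp. Qed.
Lemma Imul a b : Id b -> Id (a * b).
Proof. by move=> h; rewrite mulrC; apply: (deq (mul0r a) erefl); apply: dmul. Qed.
Lemma I1 : ~ Id 1. Proof. exact: d01. Qed.
Lemma Iprime a b : Id (a * b) -> Id a \/ Id b.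
Proof.
move=> h; case: (pselect (Id b)) => hb; [by right|left].
by apply: (dcan hb); rewrite mul0r.
Qed.
Lemma Inprime a b : ~ Id a -> ~ Id b -> ~ Id (a * b).
Proof. by move=> ha hb /Iprime [] //. Qed.
Lemma Ilin a b x y : Id a -> Id b -> Id (x * a + y * b).
Proof. by move=> ha hb; apply: Iadd; apply: Imul. Qed.
Lemma Idiff a b : Id (a - b) -> d a b.
Proof.
move=> h; apply: (deq erefl (_ : a - (a - b) = b)); first by ring.
by apply: dsub; [apply: drefl | apply: dI].
Qed.
Lemma Ieq a b : a = b -> Id a -> Id b. Proof. by move=> ->. Qed.
End Div.


Section G.
Context (A : comNzRingType) (d : A -> A -> Prop) (hd : valuation_divisibility d).

Lemma dR x y x' y' : d x y -> x = x' -> y = y' -> d x' y'.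
Proof. by move=> h <- <-. Qed.

Definition TG := {p : A * A | ~ Id d p.1 /\ ~ Id d p.2}.
Definition LG (p q : TG) := d ((sval p).1 * (sval q).2) ((sval q).1 * (sval p).2).
Definition RG (p q : TG) := LG p q /\ LG q p.

Lemma LG_refl p : LG p p. Proof. exact: (drefl hd). Qed.
Lemma LG_trans p q r : LG p q -> LG q r -> LG p r.
Proof.
case: p q r => [[a b] [ha hb]] [[c e] [hc he]] [[g f] [hg hf]]; rewrite /LG /= => h1 h2.
apply: (dcan hd he).
have h1p := dmul hd f h1; have h2p := dmul hd b h2; have E : c*b*f = c*f*b by ring.
rewrite E in h1p; apply: (dR (dtrans hd h1p h2p)); simpl; ring.
Qed.
Lemma RG_refl p : RG p p. Proof. by split; apply: LG_refl. Qed.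
Lemma RG_sym p q : RG p q -> RG q p. Proof. by case. Qed.
Lemma RG_trans p q r : RG p q -> RG q r -> RG p r.
Proof. by case=> h1 h2 [h3 h4]; split; apply: LG_trans; eassumption. Qed.
Lemma RG_cross p q : (sval p).1 * (sval q).2 = (sval q).1 * (sval p).2 -> RG p q.
Proof. by move=> E; split; rewrite /LG E; apply: (drefl hd). Qed.

Definition addTG (p q : TG) : TG :=
  exist _ ((sval p).1 * (sval q).1, (sval p).2 * (sval q).2)
    (conj (Inprime hd (svalP p).1 (svalP q).1) (Inprime hd (svalP p).2 (svalP q).2)).
Definition oppTG (p : TG) : TG :=
  exist _ ((sval p).2, (sval p).1) (conj (svalP p).2 (svalP p).1).
Definition zeroTG : TG := exist _ (1, 1) (conj (I1 hd) (I1 hd)).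

Lemma LG_add p p' q q' : LG p p' -> LG q q' -> LG (addTG p q) (addTG p' q').
Proof.
case: p p' q q' => [[a b] ?] [[a' b'] ?] [[c e] ?] [[c' e'] ?]; rewrite /LG /= => h1 h2.
by apply: (dR (dmul2 hd h1 h2)); ring.
Qed.
Lemma LG_opp p p' : LG p' p -> LG (oppTG p) (oppTG p').
Proof.
case: p p' => [[a b] ?] [[a' b'] ?]; rewrite /LG /= => h1.
by apply: (dR h1); ring.
Qed.
Lemma LG_addr p q r : LG p q -> LG (addTG p r) (addTG q r).
Proof. by move=> h; apply: LG_add => //; apply: LG_refl. Qed.

Definition QG (h : valuation_divisibility d) := quot RG.
HB.instance Definition _ := gen_eqMixin (QG hd).
HB.instance Definition _ := gen_choiceMixin (QG hd).

Definition piG (p : TG) : (QG hd) := qpi RG p.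
Definition addG (x y : (QG hd)) : (QG hd) := piG (addTG (qrepr x) (qrepr y)).
Definition oppG (x : (QG hd)) : (QG hd) := piG (oppTG (qrepr x)).
Definition zeroG : (QG hd) := piG zeroTG.

Lemma piG_eq p q : piG p = piG q <-> RG p q.
Proof. exact: qpi_eq RG_refl RG_sym RG_trans p q. Qed.
Lemma QGP (x : (QG hd)) : exists p, x = piG p. Proof. exact: quotP. Qed.
Lemma addGE p q : addG (piG p) (piG q) = piG (addTG p q).
Proof.
apply: (qlift2E RG_refl RG_sym RG_trans) => x x' y y' [h1 h2] [h3 h4].
by split; apply: LG_add.
Qed.
Lemma oppGE p : oppG (piG p) = piG (oppTG p).
Proof.
apply: (qlift1E RG_refl RG_sym RG_trans) => x y [h1 h2].
by split; apply: LG_opp.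
Qed.

Lemma addGA : associative addG.
Proof.
move=> x y z; case: (QGP x) (QGP y) (QGP z) => [p ->] [q ->] [r ->].
rewrite !addGE; apply/piG_eq/RG_cross.
by case: p q r => [[a b] ?] [[c e] ?] [[g f] ?] /=; ring.
Qed.
Lemma addGC : commutative addG.
Proof.
move=> x y; case: (QGP x) (QGP y) => [p ->] [q ->].
rewrite !addGE; apply/piG_eq/RG_cross.
by case: p q => [[a b] ?] [[c e] ?] /=; ring.
Qed.
Lemma add0G : left_id zeroG addG.
Proof.
move=> x; case: (QGP x) => [p ->].
rewrite !addGE; apply/piG_eq/RG_cross.
by case: p => [[a b] ?] /=; ring.
Qed.
Lemma addNG : left_inverse zeroG oppG addG.
Proof.
move=> x; case: (QGP x) => [p ->].
rewrite oppGE !addGE; apply/piG_eq/RG_cross.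
by case: p => [[a b] ?] /=; ring.
Qed.

HB.instance Definition _ := GRing.isZmodule.Build (QG hd) addGA addGC add0G addNG.

Definition leG (x y : (QG hd)) : bool := `[< LG (qrepr x) (qrepr y) >].
Lemma leGE p q : leG (piG p) (piG q) <-> LG p q.
Proof.
rewrite /leG asboolE; apply: (qliftPE RG_refl RG_sym RG_trans) => x x' y y' [_ h1] [h2 _] h.
exact: LG_trans (LG_trans h1 h) h2.
Qed.

Lemma QG_oag : ordered_abelian_group leG.
Proof.
split.
- by move=> x; case: (QGP x) => [p ->]; apply/leGE/LG_refl.
- move=> x y; case: (QGP x) (QGP y) => [p ->] [q ->] /leGE h1 /leGE h2.
  by apply/piG_eq.
- move=> x y z; case: (QGP x) (QGP y) (QGP z) => [p ->] [q ->] [r ->] /leGE h1 /leGE h2.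
  by apply/leGE; apply: LG_trans h2.
- move=> x y; case: (QGP x) (QGP y) => [p ->] [q ->].
  by case: (dtot hd ((sval p).1 * (sval q).2) ((sval q).1 * (sval p).2)) => h; apply/orP; [left|right]; apply/leGE.
- move=> x y z; case: (QGP x) (QGP y) (QGP z) => [p ->] [q ->] [r ->] /leGE h.
  by rewrite -[_ + _]/(addG _ _) -[piG q + _]/(addG _ _) !addGE; apply/leGE/LG_addr.
Qed.
End G.


Section K.
Context (A : comNzRingType) (d : A -> A -> Prop) (hd : valuation_divisibility d).

Lemma IR a b : Id d a -> a = b -> Id d b. Proof. by move=> h <-. Qed.

Definition TK := {p : A * A | ~ Id d p.2}.
Definition RK (p q : TK) := Id d ((sval p).1 * (sval q).2 - (sval q).1 * (sval p).2).

Lemma RK_cross p q : (sval p).1 * (sval q).2 = (sval q).1 * (sval p).2 -> RK p q.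
Proof. by move=> E; rewrite /RK E subrr; apply: I0. Qed.
Lemma RK_refl p : RK p p. Proof. exact: RK_cross. Qed.
Lemma RK_sym p q : RK p q -> RK q p.
Proof. by move=> h; apply: (IR (Iopp hd h)); ring. Qed.
Lemma RK_trans p q r : RK p q -> RK q r -> RK p r.
Proof.
case: p q r => [[a b] hb] [[c e] he] [[g f] hf]; rewrite /RK /= => h1 h2.
have := Ilin hd f b h1 h2.
have -> : f * (a * e - c * b) + b * (c * f - g * e) = e * (a * f - g * b) by ring.
by case/(Iprime hd).
Qed.

Definition addTK (p q : TK) : TK :=
  exist _ ((sval p).1 * (sval q).2 + (sval q).1 * (sval p).2, (sval p).2 * (sval q).2)
    (Inprime hd (svalP p) (svalP q)).
Definition mulTK (p q : TK) : TK :=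
  exist _ ((sval p).1 * (sval q).1, (sval p).2 * (sval q).2)
    (Inprime hd (svalP p) (svalP q)).
Definition oppTK (p : TK) : TK := exist _ (- (sval p).1, (sval p).2) (svalP p).
Definition zeroTK : TK := exist _ (0, 1) (I1 hd).
Definition oneTK : TK := exist _ (1, 1) (I1 hd).
Definition invTK (p : TK) : TK :=
  match pselect (Id d (sval p).1) with
  | left _ => zeroTK
  | right h => exist _ ((sval p).2, (sval p).1) h
  end.

Lemma RK_add p p' q q' : RK p p' -> RK q q' -> RK (addTK p q) (addTK p' q').
Proof.
case: p p' q q' => [[a b] ?] [[a' b'] ?] [[c e] ?] [[c' e'] ?]; rewrite /RK /= => h1 h2.
by apply: (IR (Ilin hd (e * e') (b * b') h1 h2)); ring.
Qed.
Lemma RK_mul p p' q q' : RK p p' -> RK q q' -> RK (mulTK p q) (mulTK p' q').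
Proof.
case: p p' q q' => [[a b] ?] [[a' b'] ?] [[c e] ?] [[c' e'] ?]; rewrite /RK /= => h1 h2.
by apply: (IR (Ilin hd (c * e') (a' * b) h1 h2)); ring.
Qed.
Lemma RK_opp p p' : RK p p' -> RK (oppTK p) (oppTK p').
Proof.
case: p p' => [[a b] ?] [[a' b'] ?]; rewrite /RK /= => h1.
by apply: (IR (Iopp hd h1)); ring.
Qed.
Lemma RK_I p p' : RK p p' -> Id d (sval p).1 -> Id d (sval p').1.
Proof.
case: p p' => [[a b] hb] [[a' b'] hb']; rewrite /RK /= => h1 ha.
have := Ilin hd b' (-1) ha h1.
have -> : b' * a + -1 * (a * b' - a' * b) = a' * b by ring.
by case/(Iprime hd).
Qed.
Lemma RK_inv p p' : RK p p' -> RK (invTK p) (invTK p').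
Proof.
move=> h; rewrite /invTK.
case: (pselect _) => h1; case: (pselect _) => h2; try exact: RK_refl.
- by case: h2; apply: RK_I h1.
- by case: h1; apply: RK_I h2; apply: RK_sym.
- move: h h1 h2; case: p p' => [[a b] ?] [[a' b'] ?]; rewrite /RK /= => h _ _.
  by apply: (IR (Iopp hd h)); ring.
Qed.

Definition QK (h : valuation_divisibility d) := quot RK.
HB.instance Definition _ := gen_eqMixin (QK hd).
HB.instance Definition _ := gen_choiceMixin (QK hd).

Definition piK (p : TK) : (QK hd) := qpi RK p.
Definition addK (x y : (QK hd)) : (QK hd) := piK (addTK (qrepr x) (qrepr y)).
Definition mulK (x y : (QK hd)) : (QK hd) := piK (mulTK (qrepr x) (qrepr y)).
Definition oppK (x : (QK hd)) : (QK hd) := piK (oppTK (qrepr x)).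
Definition invK (x : (QK hd)) : (QK hd) := piK (invTK (qrepr x)).
Definition zeroK : (QK hd) := piK zeroTK.
Definition oneK : (QK hd) := piK oneTK.

Lemma piK_eq p q : piK p = piK q <-> RK p q.
Proof. exact: qpi_eq RK_refl RK_sym RK_trans p q. Qed.
Lemma QKP (x : (QK hd)) : exists p, x = piK p. Proof. exact: quotP. Qed.
Lemma addKE p q : addK (piK p) (piK q) = piK (addTK p q).
Proof. exact: (qlift2E RK_refl RK_sym RK_trans RK_add). Qed.
Lemma mulKE p q : mulK (piK p) (piK q) = piK (mulTK p q).
Proof. exact: (qlift2E RK_refl RK_sym RK_trans RK_mul). Qed.
Lemma oppKE p : oppK (piK p) = piK (oppTK p).
Proof. exact: (qlift1E RK_refl RK_sym RK_trans RK_opp). Qed.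
Lemma invKE p : invK (piK p) = piK (invTK p).
Proof. exact: (qlift1E RK_refl RK_sym RK_trans RK_inv). Qed.

Lemma addKA : associative addK.
Proof.
move=> x y z; case: (QKP x) (QKP y) (QKP z) => [p ->] [q ->] [r ->].
rewrite !addKE; apply/piK_eq/RK_cross.
by case: p q r => [[a b] ?] [[c e] ?] [[g f] ?] /=; ring.
Qed.
Lemma addKC : commutative addK.
Proof.
move=> x y; case: (QKP x) (QKP y) => [p ->] [q ->].
rewrite !addKE; apply/piK_eq/RK_cross.
by case: p q => [[a b] ?] [[c e] ?] /=; ring.
Qed.
Lemma add0K : left_id zeroK addK.
Proof.
move=> x; case: (QKP x) => [p ->].
rewrite !addKE; apply/piK_eq/RK_cross.
by case: p => [[a b] ?] /=; ring.
Qed.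
Lemma addNK : left_inverse zeroK oppK addK.
Proof.
move=> x; case: (QKP x) => [p ->].
rewrite oppKE !addKE; apply/piK_eq/RK_cross.
by case: p => [[a b] ?] /=; ring.
Qed.

HB.instance Definition _ := GRing.isZmodule.Build (QK hd) addKA addKC add0K addNK.

Lemma mulKA : associative mulK.
Proof.
move=> x y z; case: (QKP x) (QKP y) (QKP z) => [p ->] [q ->] [r ->].
rewrite !mulKE; apply/piK_eq/RK_cross.
by case: p q r => [[a b] ?] [[c e] ?] [[g f] ?] /=; ring.
Qed.
Lemma mulKC : commutative mulK.
Proof.
move=> x y; case: (QKP x) (QKP y) => [p ->] [q ->].
rewrite !mulKE; apply/piK_eq/RK_cross.
by case: p q => [[a b] ?] [[c e] ?] /=; ring.
Qed.
Lemma mul1K : left_id oneK mulK.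
Proof.
move=> x; case: (QKP x) => [p ->].
rewrite !mulKE; apply/piK_eq/RK_cross.
by case: p => [[a b] ?] /=; ring.
Qed.
Lemma mulKDl : left_distributive mulK addK.
Proof.
move=> x y z; case: (QKP x) (QKP y) (QKP z) => [p ->] [q ->] [r ->].
rewrite (addKE p q) (mulKE p r) (mulKE q r) addKE mulKE; apply/piK_eq/RK_cross.
by case: p q r => [[a b] ?] [[c e] ?] [[g f] ?] /=; ring.
Qed.
Lemma oneK_neq0 : oneK != 0.
Proof.
apply/eqP => /piK_eq; rewrite /RK /= => H.
by apply: (I1 hd); apply: (IR H); ring.
Qed.

HB.instance Definition _ := GRing.Zmodule_isComNzRing.Build (QK hd) mulKA mulKC mul1K mulKDl oneK_neq0.

Lemma piK0 p : piK p = 0 <-> Id d (sval p).1.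
Proof.
rewrite -[0]/zeroK /zeroK piK_eq /RK /=; split => h.
  by apply: (IR h); ring.
by apply: (IR h); ring.
Qed.

Lemma mulVK (x : (QK hd)) : x != 0 -> invK x * x = 1.
Proof.
case: (QKP x) => [p ->] /eqP hx; rewrite invKE -[_ * _]/(mulK _ _).
rewrite /invTK; case: pselect => h; first by case: hx; apply/piK0.
rewrite mulKE; apply/piK_eq/RK_cross.
by case: p hx h => [[a b] ?] /= _ _; ring.
Qed.
Lemma invK0 : invK 0 = 0.
Proof.
rewrite -[0]/zeroK /zeroK invKE /invTK; case: pselect => // h.
by case: h; apply: I0.
Qed.

HB.instance Definition _ := GRing.ComNzRing_isField.Build (QK hd) mulVK invK0.

Definition phiK (a : A) : (QK hd) := piK (exist _ (a, 1) (I1 hd)).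
Lemma phiK_sub : zmod_morphism phiK.
Proof.
move=> a b; rewrite -[phiK a - _]/(addK _ (oppK _)) /phiK oppKE addKE.
by apply/piK_eq/RK_cross => /=; ring.
Qed.
Lemma phiK_mon : monoid_morphism phiK.
Proof.
split=> // a b; rewrite -[phiK a * _]/(mulK _ _) /phiK mulKE.
by apply/piK_eq/RK_cross => /=; ring.
Qed.
HB.instance Definition _ := GRing.isZmodMorphism.Build A (QK hd) phiK phiK_sub.
HB.instance Definition _ := GRing.isMonoidMorphism.Build A (QK hd) phiK phiK_mon.
Definition phiR : {rmorphism A -> (QK hd)} := phiK.
End K.


Section W.
Context (A : comNzRingType) (d : A -> A -> Prop) (hd : valuation_divisibility d).

Definition wraw (p : TK d) : option (QG hd) :=
  match pselect (Id d (sval p).1) with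
  | left _ => None
  | right h => Some (piG hd (exist _ (sval p) (conj h (svalP p))))
  end.

Lemma wrawN p : Id d (sval p).1 -> wraw p = None.
Proof. by rewrite /wraw; case: pselect. Qed.
Lemma wrawS p (h : ~ Id d (sval p).1) :
  wraw p = Some (piG hd (exist _ (sval p) (conj h (svalP p)))).
Proof. by rewrite /wraw; case: pselect => // h'; rewrite (Prop_irrelevance h' h). Qed.

Lemma wraw_compat p q : RK p q -> wraw p = wraw q.
Proof.
move=> h; case: (pselect (Id d (sval p).1)) => hp.
  by rewrite (wrawN hp) (wrawN (RK_I hd h hp)).
have hq : ~ Id d (sval q).1 by move=> hq; apply: hp; exact: (RK_I hd (RK_sym hd h) hq).
rewrite (wrawS hp) (wrawS hq); congr Some; apply/piG_eq; split; rewrite /LG /=.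
  exact: Idiff.
exact: (Idiff hd (RK_sym hd h)).
Qed.

Definition wK (x : QK hd) : option (QG hd) := wraw (qrepr x).
Lemma wKE p : wK (piK hd p) = wraw p.
Proof. exact: (qliftfE (RK_refl hd) (RK_sym hd) (RK_trans hd) wraw_compat). Qed.

Lemma wraw_le p s (h : ~ Id d (sval p).1) :
  LG (exist _ (sval p) (conj h (svalP p))) s -> oleq (@leG _ _ hd) (wraw p) (Some (piG hd s)).
Proof. by move=> H; rewrite (wrawS h) /=; apply/leGE. Qed.
Lemma key1 a b c e : d (a*e) (c*b) -> d (a*(b*e)) ((a*e+c*b)*b).
Proof. by move=> h; apply: (dR (dadd hd (drefl hd (a * e * b)) (dmul hd b h))); ring. Qed.
Lemma key2 a b c e : d (c*b) (a*e) -> d (c*(b*e)) ((a*e+c*b)*e).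
Proof. by move=> h; apply: (dR (dadd hd (dmul hd e h) (drefl hd (c * b * e)))); ring. Qed.

Lemma wK_val : field_valuation (@leG _ _ hd) wK.
Proof.
split.
- move=> x; case: (QKP x) => [p ->]; rewrite wKE piK0; split.
    by rewrite /wraw; case: pselect.
  exact: wrawN.
- move=> x y; case: (QKP x) (QKP y) => [p ->] [q ->].
  rewrite -[_ * _]/(mulK _ _) mulKE !wKE.
  case: (pselect (Id d (sval p).1)) => hp.
    by rewrite (wrawN hp) (wrawN (p:=mulTK hd p q) (IR (Imul hd (sval q).1 hp) (mulrC _ _))).
  case: (pselect (Id d (sval q).1)) => hq.
    by rewrite (wrawN hq) (wrawN (p:=mulTK hd p q) (Imul hd (sval p).1 hq)); case: (wraw p).
  rewrite (wrawS hp) (wrawS hq) (wrawS (p:=mulTK hd p q) (Inprime hd hp hq)) /=.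
  congr Some; rewrite -[_ + _]/(addG _ _) addGE; apply/piG_eq/(RG_cross hd) => /=; ring.
- move=> x y; case: (QKP x) (QKP y) => [p ->] [q ->].
  rewrite -[_ + _]/(addK _ _) addKE !wKE.
  case: (pselect (Id d (sval (addTK hd p q)).1)) => hs; first by rewrite (wrawN hs); case: (wraw p).
  rewrite (wrawS hs).
  case: (pselect (Id d (sval p).1)) => ha.
    have hc : ~ Id d (sval q).1 by move=> hc; apply: hs; apply: (Iadd hd); rewrite mulrC; apply: (Imul hd).
    apply/orP; right; apply: (wraw_le (h:=hc)); rewrite /LG /=; apply: key2.
    by apply: (dI hd); rewrite mulrC; apply: (Imul hd).
  case: (pselect (Id d (sval q).1)) => hc.
    apply/orP; left; apply: (wraw_le (h:=ha)); rewrite /LG /=; apply: key1.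
    by apply: (dI hd); rewrite mulrC; apply: (Imul hd).
  case: (dtot hd ((sval p).1 * (sval q).2) ((sval q).1 * (sval p).2)) => h.
    by apply/orP; left; apply: (wraw_le (h:=ha)); rewrite /LG /=; apply: key1.
  by apply/orP; right; apply: (wraw_le (h:=hc)); rewrite /LG /=; apply: key2.
Qed.

Definition vA (a : A) : option (QG hd) := wK (phiK hd a).

Lemma vA_None a : vA a = None <-> Id d a.
Proof.
rewrite /vA /phiK wKE; split; last by move=> h; rewrite wrawN.
by rewrite /wraw; case: pselect.
Qed.

Lemma surj_part :
  bourbaki_valuation (@leG _ _ hd) vA /\ (forall a b, d a b <-> div_of_val (@leG _ _ hd) vA a b).
Proof.
split.
  split; first exact: QG_oag.
    split; rewrite /infty_set.
    - by apply/vA_None; apply: I0.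
    - by move=> a b /vA_None ha /vA_None hb; apply/vA_None; apply: Iadd.
    - by move=> a b /vA_None hb; apply/vA_None; apply: Imul.
    - by move/vA_None; apply: I1.
    - by move=> a b /vA_None /(Iprime hd) [] h; [left|right]; apply/vA_None.
  exists (QK hd), (phiR hd), (@wK); split => //; last exact: wK_val.
  split.
    move=> a; rewrite /infty_set vA_None /=; rewrite /phiK piK0 //.
  move=> x; case: (QKP x) => [[[a b] hb] ->]; exists a, b; split.
    by apply/eqP; rewrite /= /phiK piK0.
  rewrite /= -[_ / _]/(mulK _ (invK _)) /phiK invKE /invTK; case: pselect => //= h.
  by rewrite mulKE; apply/piK_eq/(RK_cross hd) => /=; ring.
move=> a b; rewrite /div_of_val.
case: (pselect (Id d a)) => ha.
  have -> : vA a = None by apply/vA_None.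
  split => h.
    by have -> : vA b = None by apply/vA_None; exact: (dtrans hd ha h).
  by apply: (dI hd); apply/vA_None; case: (vA b) h.
case: (pselect (Id d b)) => hb.
  have -> : vA b = None by apply/vA_None.
  by split => _; [case: (vA a) | exact: (dI hd _ hb)].
rewrite /vA /phiK !wKE (wrawS (p:=exist _ (a,1) (I1 hd)) ha) (wrawS (p:=exist _ (b,1) (I1 hd)) hb) /=.
rewrite leGE /LG /= !mulr1; split => //.
Qed.
End W.


Section OAG.
Context (G : zmodType) (le : rel G) (hG : ordered_abelian_group le).

Lemma le_refl x : le x x. Proof. by case: hG. Qed.
Lemma le_anti x y : le x y -> le y x -> x = y. Proof. by case: hG => _ H _ _ _; apply: H. Qed.
Lemma le_trans x y z : le x y -> le y z -> le x z. Proof. by case: hG => _ _ H _ _; apply: H. Qed.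
Lemma le_total x y : le x y || le y x. Proof. by case: hG. Qed.
Lemma le_add x y z : le x y -> le (x + z) (y + z). Proof. by case: hG => _ _ _ _ H; apply: H. Qed.
Lemma le_addK x y z : le (x + z) (y + z) -> le x y.
Proof. by move=> /(le_add (- z)); rewrite !addrK. Qed.

Lemma oleq_refl x : oleq le x x. Proof. by case: x => //= ?; apply: le_refl. Qed.
Lemma oleq_trans x y z : oleq le x y -> oleq le y z -> oleq le x z.
Proof. by case: x y z => [x|] [y|] [z|] //=; apply: le_trans. Qed.
Lemma oleq_total x y : oleq le x y \/ oleq le y x.
Proof. by case: x y => [x|] [y|] //=; [case/orP: (le_total x y)|left|right|left]; auto. Qed.
Lemma oleq_add x y z : oleq le x y -> oleq le (oadd x z) (oadd y z).
Proof. by case: x y z => [x|] [y|] [z|] //=; apply: le_add. Qed.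
Lemma oleq_addK x y g : oleq le (oadd x (Some g)) (oadd y (Some g)) -> oleq le x y.
Proof. by case: x y => [x|] [y|] //=; apply: le_addK. Qed.

Lemma double0 (h : G) : h + h = 0 -> h = 0.
Proof.
move=> E; case/orP: (le_total h 0) => H.
  by apply: le_anti => //; move: (le_add h H); rewrite E add0r.
by apply: le_anti => //; move: (le_add h H); rewrite E add0r.
Qed.

Section FV.
Context (K : fieldType) (w : K -> option G) (hw : field_valuation le w).
Lemma wNone x : w x = None <-> x = 0. Proof. by case: hw. Qed.
Lemma wM x y : w (x * y) = oadd (w x) (w y). Proof. by case: hw => _ H _; apply: H. Qed.
Lemma wD x y : oleq le (w x) (w (x + y)) || oleq le (w y) (w (x + y)). Proof. by case: hw. Qed.
Lemma w1 : w 1 = Some 0.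
Proof.
case E: (w 1) => [g|]; last by move/wNone: E => /eqP; rewrite oner_eq0.
have := wM 1 1; rewrite mulr1 E /= => -[] E2; congr Some.
by apply: (@addrI _ g); rewrite addr0 -E2.
Qed.
Lemma wN1 : w (-1) = Some 0.
Proof.
have := wM (-1) (-1); rewrite mulrNN mulr1 w1.
case: (w (-1)) => [h|] //= [] /esym /double0 -> //.
Qed.
Lemma wN x : w (- x) = w x.
Proof. by rewrite -mulN1r wM wN1; case: (w x) => //= g; rewrite add0r. Qed.
Lemma wB_ge z x y : oleq le z (w x) -> oleq le z (w y) -> oleq le z (w (x - y)).
Proof.
move=> h1 h2; case/orP: (wD x (- y)) => h.
  exact: oleq_trans h1 h.
by rewrite wN in h; apply: oleq_trans h2 h.
Qed.
Lemma valring_iff x y g : w y = Some g ->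
  (oleq le (Some 0) (w (x / y)) <-> oleq le (Some g) (w x)).
Proof.
move=> Ey.
have y0 : y != 0 by apply/eqP => /wNone; rewrite Ey.
have := wM y y^-1; rewrite mulfV // w1 Ey.
case Ei: (w y^-1) => [h|] //= [] Egh.
rewrite wM Ei; case: (w x) => [f|] //=; split => H.
  by move: (le_add g H); rewrite add0r -addrA (addrC h) -Egh addr0.
by move: (le_add h H); rewrite -Egh.
Qed.
End FV.
End OAG.

Section Part1.
Context (A : comNzRingType).

Lemma part1 (G : zmodType) (le : rel G) (v : A -> option G) :
  bourbaki_valuation le v ->
  valuation_divisibility (div_of_val le v) /\
  (forall a : A, support_div (div_of_val le v) a <-> v a = None).
Proof.
case=> hG _ [K [phi [w [_ hw hv]]]].
rewrite /div_of_val /support_div.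
have v0 : v 0 = None by rewrite hv rmorph0; apply/(wNone hw).
have v1 : v 1 = Some 0 by rewrite hv rmorph1; exact: (w1 hw).
split; last by move=> a; rewrite v0; case: (v a).
split; [split| |].
- by move=> a; apply: oleq_refl.
- by move=> a b c; apply: oleq_trans.
- by move=> a b c h1 h2; rewrite !hv rmorphB; apply: (wB_ge hG hw); rewrite -!hv.
- by move=> a b c h; rewrite !hv !rmorphM !(wM hw) -!hv; apply: oleq_add.
- by rewrite v0 v1.
- by move=> a b; apply: (oleq_total hG).
- move=> a b c; rewrite v0 !hv !rmorphM !(wM hw) -!hv.
  by case E: (v c) => [g|] //= _; apply: oleq_addK.
Qed.
End Part1.

Section Part2.
Context (A : comNzRingType).

Lemma vr_iff (G : zmodType) (le : rel G) (v : A -> option G) (K : fieldType)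
  (phi : {rmorphism A -> K}) (w : K -> option G) :
  ordered_abelian_group le -> induced_field_valuation le v phi w ->
  forall a b, v b <> None ->
  (valuation_ring le w (phi a / phi b) <-> oleq le (v b) (v a)).
Proof.
move=> hG [_ hw hv] a b; case E: (v b) => [g|] // _.
have Eb : w (phi b) = Some g by rewrite -hv.
by rewrite /valuation_ring (valring_iff hG hw _ Eb) hv.

Qed.

Lemma part2 (G1 : zmodType) (le1 : rel G1) (v1 : A -> option G1)
          (G2 : zmodType) (le2 : rel G2) (v2 : A -> option G2) :
     bourbaki_valuation le1 v1 -> bourbaki_valuation le2 v2 ->
     ((forall a b : A, div_of_val le1 v1 a b <-> div_of_val le2 v2 a b) <->
      bourbaki_equiv le1 v1 le2 v2).
Proof.
move=> hb1 hb2.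
have [_ sup1] := part1 hb1; have [_ sup2] := part1 hb2.
case: hb1 => hG1 _ [K1 [phi1 [w1 ind1]]].
case: hb2 => hG2 _ [K2 [phi2 [w2 ind2]]].
split.
- move=> H; split.
    by move=> a; rewrite -(sup1 a) -(sup2 a); apply: H.
  move=> K1' phi1' w1' K2' phi2' w2' i1 i2 a b hb.
  have hb2 : v2 b <> None.
    by move=> E; apply: hb; apply/sup1; apply/H; apply/sup2.
  rewrite (vr_iff hG1 i1 _ hb) (vr_iff hG2 i2 _ hb2); exact: H.
- case=> Enone Evr a b.
  case: (pselect (v1 a = None)) => ha.
    have ha2 : v2 a = None by apply/Enone.
    rewrite /div_of_val ha ha2; split => h.
      by have /Enone -> : v1 b = None by case: (v1 b) h.
    by have /Enone -> : v2 b = None by case: (v2 b) h.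
  have ha2 : v2 a <> None by move/Enone.
  rewrite /div_of_val -(vr_iff hG1 ind1 _ ha) -(vr_iff hG2 ind2 _ ha2).
  exact: Evr.
Qed.
End Part2.

Theorem theorem3p1 (A : comNzRingType) :
  (* v |-> |^v lands in valuation divisibilities, and I(|^v) = v^-1(oo) *)
  (forall (G : zmodType) (le : rel G) (v : A -> option G),
     bourbaki_valuation le v ->
     valuation_divisibility (div_of_val le v) /\
     (forall a : A, support_div (div_of_val le v) a <-> v a = None)) /\
  (* injective up to equivalence *)
  (forall (G1 : zmodType) (le1 : rel G1) (v1 : A -> option G1)
          (G2 : zmodType) (le2 : rel G2) (v2 : A -> option G2),
     bourbaki_valuation le1 v1 -> bourbaki_valuation le2 v2 ->
     ((forall a b : A, div_of_val le1 v1 a b <-> div_of_val le2 v2 a b) <->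
      bourbaki_equiv le1 v1 le2 v2)) /\
  (* surjective *)
  (forall d : A -> A -> Prop, valuation_divisibility d ->
     exists (G : zmodType) (le : rel G) (v : A -> option G),
       bourbaki_valuation le v /\ (forall a b : A, d a b <-> div_of_val le v a b)).

Proof.
split; first by move=> G le v; apply: part1.
split; first by move=> G1 le1 v1 G2 le2 v2; apply: part2.
move=> d hd; exists (QG hd), (@leG _ _ hd), (vA hd); exact: surj_part.
Qed.
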